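(* Let $n\geq5$ and let $U,V$ be monomials. Then $U,V\in F(J(P_{n-3})^2)$ if and only if both $x_n^2x_{n-2}^2U$ and $x_n^2x_{n-2}^2V$ belong to $F(J(P_n)^2)$. Moreover, in that case $U>_{\mathcal R}V$ (rooted order on $F(J(P_{n-3})^2)$) if and only if $x_n^2x_{n-2}^2U>_{\mathcal R}x_n^2x_{n-2}^2V$ (rooted order on $F(J(P_n)^2)$).
   Context: Let $K$ be a field. For $m\geq 1$, $P_m$ is the path graph on vertices $x_1,\ldots,x_m$ with edges $\{x_i,x_{i+1}\}$. The cover ideal $J(P_m)$ is generated by the monomials $\prod_{x\in C}x$ with $C$ a minimal vertex cover of $P_m$. For a monomial ideal $I$, $G(I)$ is its set of minimal monomial generators and $F(I^2)=\{uv:u,v\in G(I)\}$. The rooted list $\mathcal R(P_m)$ is defined recursively: $\mathcal R(P_1)$ empty; $\mathcal R(P_2)=x_1,x_2$; $\mathcal R(P_3)=x_2,x_1x_3$; $\mathcal R(P_4)=x_1x_3,x_2x_3,x_2x_4$; for $m\geq5$, if $\mathcal R(P_{m-2})=u_1,\ldots,u_r$ and $\mathcal R(P_{m-3})=v_1,\ldots,v_s$, then $\mathcal R(P_m)=x_{m-1}u_1,\ldots,x_{m-1}u_r,x_mx_{m-2}v_1,\ldots,x_mx_{m-2}v_s$; it lists each element of $G(J(P_m))$ once. With $\mathcal R(P_m)=u_1,\ldots,u_q$, each $M\in F(J(P_m)^2)$ can be written $u_1^{a_1}\cdots u_q^{a_q}$ with $a_i\geq0$, $\sum a_i=2$; the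 maximal expression of $M$ is the one with lexicographically largest exponent vector. The rooted order on $F(J(P_m)^2)$: $M>_{\mathcal R}N$ iff the exponent vector of the maximal expression of $M$ is lexicographically larger than that of $N$. *)

(* Defs.v *)
From mathcomp Require Import all_boot.
Set Implicit Arguments. Unset Strict Implicit. Unset Printing Implicit Defensive.

(* A monomial of K[x_1, x_2, ...] is represented by its exponent function:
   e i = exponent of x_i (index 0 is not a variable). The field K plays no
   role for monomials. *)
Definition mono := nat -> nat.

Definition is_monomial (u : mono) : Prop :=
  u 0 = 0 /\ exists N, forall i, N < i -> u i = 0.

Definition mone : mono := fun _ => 0.
Definition mmul (u v : mono) : mono := fun i => u i + v i.
Definition mpow (u : mono) (k : nat) : mono := fun i => k * u i.
Definition var (i : nat) : mono := fun j => if j == i then 1 else 0.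
Definition mdivides (u w : mono) : Prop := forall i, u i <= w i.

(* vertex covers of the path P_m on x_1..x_m, as boolean predicates on indices *)
Definition vcover (m : nat) (C : nat -> bool) : Prop :=
  (forall i, C i -> (1 <= i <= m)) /\ (forall i, 1 <= i < m -> C i || C i.+1).
Definition min_vcover (m : nat) (C : nat -> bool) : Prop :=
  vcover m C /\
  forall C', vcover m C' -> (forall i, C' i -> C i) -> forall i, C i -> C' i.
Definition cover_mono (C : nat -> bool) : mono := fun i => if C i then 1 else 0.

(* monomials of the cover ideal J(P_m): divisible by some generator prod_{x in C} x *)
Definition in_J (m : nat) (w : mono) : Prop :=
  exists C, min_vcover m C /\ mdivides (cover_mono C) w.
Definition in_GJ (m : nat) (u : mono) : Prop :=
  in_J m u /\ forall w, in_J m w -> mdivides w u -> w = u.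
Definition inF (m : nat) (M : mono) : Prop :=
  exists u v, in_GJ m u /\ in_GJ m v /\ M = mmul u v.

Fixpoint rooted (m : nat) : seq mono :=
  match m with
  | 0 | 1 => [::]
  | 2 => [:: var 1; var 2]
  | 3 => [:: var 2; mmul (var 1) (var 3)]
  | 4 => [:: mmul (var 1) (var 3); mmul (var 2) (var 3); mmul (var 2) (var 4)]
  | S (S ((S m3) as m2)) as k =>
      map (mmul (var k.-1)) (rooted m2) ++
      map (mmul (mmul (var k) (var k.-2))) (rooted m3)
  end.

Definition expr_val (R : seq mono) (a : seq nat) : mono :=
  fun j => \sum_(i < size R) nth 0 a i * nth mone R i j.
Definition is_expr (R : seq mono) (M : mono) (a : seq nat) : Prop :=
  size a = size R /\ sumn a = 2 /\ expr_val R a = M.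

Definition lex_lt (a b : seq nat) : Prop :=
  exists k, k < size a /\ take k a = take k b /\ nth 0 a k < nth 0 b k.

Definition is_max_expr (R : seq mono) (M : mono) (a : seq nat) : Prop :=
  is_expr R M a /\ forall b, is_expr R M b -> ~ lex_lt a b.

Definition rooted_gt (m : nat) (M N : mono) : Prop :=
  exists a b, is_max_expr (rooted m) M a /\ is_max_expr (rooted m) N b /\
              lex_lt b a.

Definition lift3 (n : nat) (U : mono) : mono :=
  mmul (mmul (mpow (var n) 2) (mpow (var (n - 2)) 2)) U.

(* Main.v *)
Require Import Defs.
From mathcomp Require Import all_boot zify.
From Stdlib Require Import FunctionalExtensionality.
From Stdlib Require List.
Lemma varE i j : var i j = (j == i). Proof. by rewrite /var; case: eqP. Qed.
Lemma cmE C j : cover_mono C j = C j. Proof. by rewrite /cover_mono; case: (C j). Qed.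

Lemma lift3E k U j : lift3 k.+3 U j = 2 * (j == k.+3) + 2 * (j == k.+1) + U j.
Proof. by rewrite /lift3 /mmul /mpow !varE subSS subSS subn0. Qed.

Lemma GJ_iff m u : in_GJ m u <-> exists C, min_vcover m C /\ u = cover_mono C.
Proof.
split.
- move=> [[C [hC hd]] hm]; exists C; split => //.
  symmetry; apply: hm => //; exists C; split => // i.
- move=> [C [hC ->]]; split; first by exists C; split => // i.
  move=> w [C' [hC' hd']] hd.
  have sub : forall i, C' i -> C i.
    move=> i ci; have := hd' i; have := hd i; rewrite !cmE ci; lia.
  have := hC.2 C' hC'.1 sub => sub2.
  apply: functional_extensionality => i.
  have := hd' i; have := hd i; rewrite !cmE.
  have := sub2 i; have := sub i; case: (C i); case: (C' i); lia.
Qed.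

Lemma liftC_vc k D : vcover k D ->
  vcover k.+3 (fun i => D i || (i == k.+1) || (i == k.+3)).
Proof.
move=> [hb he]; split.
- move=> i /orP[/orP[/hb|]|]; lia.
- move=> i hi; have := he i; have := hb i; have := hb i.+1; lia.
Qed.

Lemma drop_top k C : min_vcover k.+3 C -> C k.+3 -> C k.+2 -> False.
Proof.
move=> [[hb he] hmin] c3 c2.
pose C' := fun i => C i && (i != k.+3).
have hv : vcover k.+3 C'.
  split.
  - by move=> i /andP[/hb].
  - move=> i hi; rewrite /C'.
    case: (eqVneq i k.+2) => [->|ne]; first lia.
    have := he i hi; lia.
have sub : forall i, C' i -> C i by move=> i /andP[].
have := hmin C' hv sub k.+3 c3; by rewrite /C' eqxx andbF.
Qed.

Lemma liftC_min k D : min_vcover k D ->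
  min_vcover k.+3 (fun i => D i || (i == k.+1) || (i == k.+3)).
Proof.
move=> [[hb he] hmin]; split; first exact: liftC_vc.
move=> C' [hb' he'] hsub.
have n2 : ~~ C' k.+2.
  apply/negP => /hsub /orP[/orP[/hb|]|]; lia.
have c3 : C' k.+3 by have := he' k.+2; lia.
have c1 : C' k.+1 by have := he' k.+1; lia.
pose D' := fun i => C' i && (i <= k).
have hv' : vcover k D'.
  split.
  - move=> i /andP[/hb']; lia.
  - move=> i hi; rewrite /D'; have := he' i; lia.
have sub : forall i, D' i -> D i.
  move=> i /andP[/hsub]; lia.
have := hmin D' hv' sub => h.
move=> i /orP[/orP[/h/andP[]//|/eqP->//]|/eqP->//].
Qed.

Lemma restr_min k C : min_vcover k.+3 C -> C k.+3 -> C k.+1 ->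
  min_vcover k (fun i => C i && (i <= k)) /\ ~~ C k.+2.
Proof.
move=> hC c3 c1.
have n2 : ~~ C k.+2 by apply/negP => c2; exact: (@drop_top _ _ hC c3 c2).
split => //.
move: hC => [[hb he] hmin].
split.
  split.
  - move=> i /andP[/hb]; lia.
  - move=> i hi; have := he i; lia.
move=> D' hv' hsub i /andP[ci ik].
have hv := @liftC_vc _ _ hv'.
have sub : forall i, (D' i || (i == k.+1) || (i == k.+3)) -> C i.
  move=> j /orP[/orP[/hsub/andP[]//|/eqP->//]|/eqP->//].
have := hmin _ hv sub i ci; lia.
Qed.

Lemma inF_lift k U : inF k U <-> inF k.+3 (lift3 k.+3 U).
Proof.
split.
- move=> [u [v [/GJ_iff [D1 [m1 ->]] [/GJ_iff [D2 [m2 ->]] ->]]]].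
  exists (cover_mono (fun i => D1 i || (i == k.+1) || (i == k.+3))).
  exists (cover_mono (fun i => D2 i || (i == k.+1) || (i == k.+3))).
  split; first by apply/GJ_iff; eexists; split; [apply: (@liftC_min _ _ m1)|].
  split; first by apply/GJ_iff; eexists; split; [apply: (@liftC_min _ _ m2)|].
  apply: functional_extensionality => j.
  rewrite lift3E /mmul !cmE.
  have := m1.1.1 j; have := m2.1.1 j; lia.
- move=> [u [v [/GJ_iff [C1 [m1 ->]] [/GJ_iff [C2 [m2 ->]] he]]]].
  have hj : forall j, 2 * (j == k.+3) + 2 * (j == k.+1) + U j = C1 j + C2 j.
    by move=> j; have := congr1 (fun f => f j) he; rewrite lift3E /mmul !cmE.
  have c13 : C1 k.+3 by have := hj k.+3; lia.
  have c23 : C2 k.+3 by have := hj k.+3; lia.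
  have c11 : C1 k.+1 by have := hj k.+1; lia.
  have c21 : C2 k.+1 by have := hj k.+1; lia.
  have [r1 n1] := @restr_min _ _ m1 c13 c11.
  have [r2 n2] := @restr_min _ _ m2 c23 c21.
  exists (cover_mono (fun i => C1 i && (i <= k))).
  exists (cover_mono (fun i => C2 i && (i <= k))).
  split; first by apply/GJ_iff; eexists; split; [apply: r1|].
  split; first by apply/GJ_iff; eexists; split; [apply: r2|].
  apply: functional_extensionality => j.
  rewrite /mmul !cmE.
  have := hj j; have := m1.1.1 j; have := m2.1.1 j.
  case: (eqVneq j k.+2) => [->|ne]; lia.
Qed.

Lemma rs k : 2 <= k -> rooted k.+3 = map (mmul (var k.+2)) (rooted k.+1) ++ map (mmul (mmul (var k.+3) (var k.+1))) (rooted k).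
Proof. by case: k => [|[|j]]. Qed.

Lemma in_cat_or (x : mono) s1 s2 : List.In x (s1 ++ s2) -> List.In x s1 \/ List.In x s2.
Proof. elim: s1 => [|y s1 IH] /=; [by right|]. by move=> [->|/IH [h|h]]; auto. Qed.

Lemma in_map_ex (f : mono -> mono) (y : mono) s : List.In y (map f s) -> exists x, f x = y /\ List.In x s.
Proof. elim: s => [|x s IH] //= [<-|/IH [z [h1 h2]]]; eauto. Qed.

Lemma supp_in N : forall m, m <= N -> forall v, List.In v (rooted m) -> forall i, m < i -> v i = 0.
Proof.
elim: N => [|N IH] m hm v.
- by case: m hm.
- case: m hm => [|[|[|[|[|k]]]]] hm.
  + by [].
  + by [].
  + by move=> /= [<-|[<-|[]]] i hi; rewrite varE; lia.
  + by move=> /= [<-|[<-|[]]] i hi; rewrite /mmul !varE; lia.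
  + by move=> /= [<-|[<-|[<-|[]]]] i hi; rewrite /mmul !varE; lia.
  + rewrite -[k.+1.+4]/(k.+2.+3) rs // => /in_cat_or [] /in_map_ex [x [<- hx]] i hi; rewrite /mmul !varE.
    * rewrite (IH k.+3 _ x hx i); lia.
    * rewrite (IH k.+2 _ x hx i); lia.
Qed.

Lemma nth_in (s : seq mono) i : nth mone s i = mone \/ List.In (nth mone s i) s.
Proof.
elim: s i => [|x s IH] [|i] /=; auto.
by case: (IH i); auto.
Qed.

Lemma supp m i0 i : m < i -> nth mone (rooted m) i0 i = 0.
Proof.
move=> hi; case: (nth_in (rooted m) i0) => [->//|h].
exact: (@supp_in m m (leqnn m) _ h i hi).
Qed.

Lemma ev_cat R1 R2 A1 A2 j : size A1 = size R1 ->
  expr_val (R1 ++ R2) (A1 ++ A2) j = expr_val R1 A1 j + expr_val R2 A2 j.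
Proof.
move=> HA; rewrite /expr_val size_cat big_split_ord /=.
congr (_ + _); apply: eq_bigr => i _.
- by rewrite !nth_cat HA ltn_ord.
- by rewrite !nth_cat HA ltnNge leq_addr /= addKn.
Qed.

Lemma ev_map w R a j : size a = size R ->
  expr_val (map (mmul w) R) a j = sumn a * w j + expr_val R a j.
Proof.
move=> Ha; rewrite /expr_val size_map.
have -> : sumn a = \sum_(i < size R) nth 0 a i.
  by rewrite -Ha sumnE (big_nth 0) big_mkord.
rewrite big_distrl -big_split; apply: eq_bigr => i _.
by rewrite (nth_map mone) // /mmul mulnDr.
Qed.

Lemma ev0 R a j : (forall i, nth mone R i j = 0) -> expr_val R a j = 0.
Proof. by move=> h; rewrite /expr_val big1 // => i _; rewrite h muln0. Qed.

Lemma ev_nseq R r j : expr_val R (nseq r 0) j = 0.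
Proof. by rewrite /expr_val big1 // => i _; rewrite nth_nseq; case: ifP. Qed.

Lemma nth_map_mmul w (s : seq mono) i j :
  nth mone (map (mmul w) s) i j = if i < size s then w j + nth mone s i j else 0.
Proof.
case: ifP => h; first by rewrite (nth_map mone).
by rewrite nth_default // size_map leqNgt h.
Qed.

Section K.
Variable k : nat.
Hypothesis hk : 2 <= k.
Let R1 := map (mmul (var k.+2)) (rooted k.+1).
Let w := mmul (var k.+3) (var k.+1).

Lemma expr_char U A : is_expr (rooted k.+3) (lift3 k.+3 U) A <->
  exists a, A = nseq (size R1) 0 ++ a /\ is_expr (rooted k) U a.
Proof.
rewrite rs //; split.
- move=> [hs [hsum hev]].
  have hj : forall j, expr_val (R1 ++ map (mmul w) (rooted k)) A j = lift3 k.+3 U j.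
    by move=> j; rewrite hev.
  rewrite -(cat_take_drop (size R1) A) in hsum hj *.
  have s1 : size (take (size R1) A) = size R1.
    by rewrite size_take hs size_cat /R1; case: ifP; lia.
  have s2 : size (drop (size R1) A) = size (rooted k).
    by rewrite size_drop hs size_cat /R1 !size_map; lia.
  set A1 := take _ A in hsum hj s1 *; set A2 := drop _ A in hsum hj s2 *.
  have hv : forall j, expr_val R1 A1 j + sumn A2 * w j + expr_val (rooted k) A2 j = lift3 k.+3 U j.
    by move=> j; rewrite -hj ev_cat // ev_map // addnA.
  have e1 : expr_val R1 A1 k.+3 = 0.
    apply: ev0 => i; rewrite nth_map_mmul; case: ifP => // _.
    by rewrite supp // varE; lia.
  have e2 : expr_val (rooted k) A2 k.+3 = 0 by apply: ev0 => i; apply: supp; lia.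
  rewrite sumn_cat in hsum.
  have := hv k.+3; rewrite e1 e2 lift3E /w /mmul !varE => h3.
  have /natnseq0P hA1 : sumn A1 == 0 by apply/eqP; lia.
  exists A2; split; first by rewrite {1}hA1 s1.
  split => //; split; first by lia.
  apply: functional_extensionality => j.
  have := hv j; rewrite hA1 ev_nseq lift3E /w /mmul !varE; lia.
- move=> [a [-> [ha [hsum hev]]]].
  split; first by rewrite !size_cat size_nseq ha /R1 !size_map.
  split; first by rewrite sumn_cat hsum; elim: (size R1).
  apply: functional_extensionality => j.
  rewrite ev_cat ?size_nseq // (@ev_map w (rooted k) a j ha) ev_nseq hsum hev lift3E /w /mmul !varE; lia.
Qed.
End K.

Lemma lex_cat (c a b : seq nat) : lex_lt (c ++ a) (c ++ b) <-> lex_lt a b.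
Proof.
split.
- move=> [i [hi [ht hn]]].
  case: (ltnP i (size c)) => h.
    by rewrite !nth_cat h ltnn in hn.
  exists (i - size c); split; first by rewrite size_cat in hi; lia.
  have h' : (i < size c) = false by lia.
  rewrite !take_cat h' in ht.
  rewrite !nth_cat h' in hn.
  split => //.
  by have := congr1 (drop (size c)) ht; rewrite !drop_size_cat.
- move=> [i [hi [ht hn]]].
  exists (size c + i); split; first by rewrite size_cat; lia.
  have h' : (size c + i < size c) = false by lia.
  rewrite !take_cat !nth_cat h' addKn ht; split => //.
Qed.

Section K2.
Variable k : nat.
Hypothesis hk : 2 <= k.

Lemma max_char U A : is_max_expr (rooted k.+3) (lift3 k.+3 U) A <->
  exists a, A = nseq (size (map (mmul (var k.+2)) (rooted k.+1))) 0 ++ a /\ is_max_expr (rooted k) U a.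
Proof.
split.
- move=> [/(@expr_char k hk _ _) [a [-> ha]] hm].
  exists a; split => //; split => // b hb hl.
  apply: (hm (nseq (size (map (mmul (var k.+2)) (rooted k.+1))) 0 ++ b)).
    by apply/(@expr_char k hk _ _); exists b.
  by apply/lex_cat.
- move=> [a [-> [ha hm]]]; split; first by apply/(@expr_char k hk _ _); exists a.
  move=> B /(@expr_char k hk _ _) [b [-> hb]] /lex_cat; exact: hm.
Qed.

Lemma gt_char U V : rooted_gt k U V <-> rooted_gt k.+3 (lift3 k.+3 U) (lift3 k.+3 V).
Proof.
split.
- move=> [a [b [ha [hb hl]]]].
  exists (nseq (size (map (mmul (var k.+2)) (rooted k.+1))) 0 ++ a).
  exists (nseq (size (map (mmul (var k.+2)) (rooted k.+1))) 0 ++ b).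
  split; first by apply/max_char; exists a.
  split; first by apply/max_char; exists b.
  by apply/lex_cat.
- move=> [A [B [/max_char [a [-> ha]] [/max_char [b [-> hb]] /lex_cat hl]]]].
  by exists a, b.
Qed.
End K2.

Theorem lemma3p4 (n : nat) (U V : mono) :
  5 <= n -> is_monomial U -> is_monomial V ->
  ((inF (n - 3) U /\ inF (n - 3) V) <-> (inF n (lift3 n U) /\ inF n (lift3 n V))) /\
  (inF (n - 3) U -> inF (n - 3) V ->
     (rooted_gt (n - 3) U V <-> rooted_gt n (lift3 n U) (lift3 n V))).
Proof.
case: n => [|[|[|k]]] //; rewrite ltnS => hk _ _.
have -> : k.+3 - 3 = k by lia.
have hk2 : 2 <= k by lia.
split.
- by rewrite (inF_lift k U) (inF_lift k V).
- move=> _ _; exact: gt_char.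
Qed.
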